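(* Let $\mathcal{X}$ be a finite set, $\pi$ a probability distribution on $\mathcal{X}$ with $\pi(x)>0$ for all $x$, and $\mathcal{N}\colon\mathcal{X}\to 2^{\mathcal{X}}$ a symmetric neighborhood mapping (with $x\notin\mathcal{N}(x)$, and $y\in\mathcal{N}(x)\iff x\in\mathcal{N}(y)$) such that every stochastic matrix $K$ on $\mathcal{X}$ with $K(x,y)>0$ if and only if $y\in\mathcal{N}(x)$ is irreducible. For a function $h\colon(0,\infty)\to(0,\infty)$ define $$K_h(x,y)=\frac{\mathbf{1}_{\mathcal{N}(x)}(y)}{Z_h(x)}\,h\!\left(\frac{\pi(y)}{\pi(x)}\right),\qquad Z_h(x)=\sum_{y\in\mathcal{N}(x)}h\!\left(\frac{\pi(y)}{\pi(x)}\right),$$ and let $\pi_h$ be the stationary distribution of $K_h$. If $h(u)=u^a$ for some $a\ge 0$, then $\pi_h(x)\propto\pi(x)^{2a}Z_h(x)$. If $h$ is a balancing function, i.e. $h(u)=u\,h(1/u)$ for all $u>0$, then $\pi_h(x)\propto\pi(x)Z_h(x)$. Moreover, in both cases $K_h$ is reversible (with respect to $\pi_h$).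
   Context: $\mathbf{1}_{A}$ denotes the indicator function of a set $A$; $\propto$ means equality up to a positive normalizing constant independent of $x$. *)

(* Defs.v *)
From HB Require Import structures.
From mathcomp Require Import all_boot all_order all_algebra.
From mathcomp Require Import all_classical all_reals all_analysis.
Set Implicit Arguments. Unset Strict Implicit. Unset Printing Implicit Defensive.
Import Order.TTheory GRing.Theory Num.Theory.
Local Open Scope ring_scope.

Section Defs.
Variables (R : realType) (T : finType).

Definition is_distribution (p : T -> R) : Prop :=
  (forall x, 0 <= p x) /\ \sum_(x : T) p x = 1.

Definition stochastic (K : T -> T -> R) : Prop :=
  (forall x y, 0 <= K x y) /\ (forall x, \sum_(y : T) K x y = 1).

Fixpoint kpow (K : T -> T -> R) (n : nat) : T -> T -> R :=
  match n with
  | 0 => fun x y => if x == y then 1 else 0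
  | n'.+1 => fun x y => \sum_(z : T) kpow K n' x z * K z y
  end.

Definition irreducible (K : T -> T -> R) : Prop :=
  forall x y, exists n, 0 < kpow K n x y.

Definition stationary (K : T -> T -> R) (p : T -> R) : Prop :=
  forall y, \sum_(x : T) p x * K x y = p y.

Definition reversible (K : T -> T -> R) (p : T -> R) : Prop :=
  forall x y, p x * K x y = p y * K y x.

Definition Zh (pi : T -> R) (N : T -> {set T}) (h : R -> R) (x : T) : R :=
  \sum_(y in N x) h (pi y / pi x).

Definition Kh (pi : T -> R) (N : T -> {set T}) (h : R -> R) (x y : T) : R :=
  (if y \in N x then 1 else 0) * h (pi y / pi x) / Zh pi N h x.

Definition balancing (h : R -> R) : Prop :=
  forall u, 0 < u -> h u = u * h (u^-1).

(* "pi_h, the stationary distribution of K, satisfies pi_h(x) ∝ w(x), and K is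
   reversible w.r.t. pi_h": the stationary distributions of K are exactly the
   distributions proportional (with positive constant) to w, and K is
   reversible w.r.t. any stationary distribution. *)
Definition stationary_prop_and_reversible (K : T -> T -> R) (w : T -> R) : Prop :=
  (forall p : T -> R,
      (is_distribution p /\ stationary K p) <->
      (is_distribution p /\ exists2 c : R, 0 < c & forall x, p x = c * w x))
  /\ (forall p : T -> R, is_distribution p -> stationary K p -> reversible K p).

End Defs.

(* Main.v *)
Require Import Defs.
From HB Require Import structures.
From mathcomp Require Import all_boot all_order all_algebra.
From mathcomp Require Import all_classical all_reals all_analysis.
From mathcomp Require Import ring lra.
Import Order.TTheory GRing.Theory Num.Theory.
Local Open Scope ring_scope.

Lemma exists_max (R : realType) (T : finType) (f : T -> R) (i0 : T) :
  exists x0, forall y, f y <= f x0.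
Proof.
by case: (@arg_maxP _ R T i0 xpredT f isT) => x0 _ H; exists x0 => y; apply: H.
Qed.

Lemma abs_main (R : realType) (T : finType) (K : T -> T -> R) (w : T -> R) :
  stochastic K -> irreducible K -> (forall x, 0 < w x) ->
  (forall x y, w x * K x y = w y * K y x) ->
  stationary_prop_and_reversible K w.
Proof.
move=> [K0 K1] Kirr w0 db.
have key : forall p, is_distribution p -> stationary K p ->
    exists2 c : R, 0 < c & forall x, p x = c * w x.
  move=> p [p0 p1] st.
  have [i0|Hn] := pickP (fun _ : T => true); last first.
    by move: p1; rewrite big_pred0 // => /eqP; rewrite eq_sym oner_eq0.
  move=> _.
  pose f x := p x / w x.
  have pf x : p x = f x * w x by rewrite /f divfK // gt_eqF.
  have harm y : \sum_x K y x * f x = f y.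
    have := st y; rewrite (eq_bigr (fun x => w y * (K y x * f x))); last first.
      by move=> x _; rewrite pf -mulrA db; ring.
    rewrite -mulr_sumr => E. rewrite /f -E mulrC mulKf // gt_eqF //.
  have [x0 Hmax] := @exists_max _ _ f i0.
  set M := f x0.
  have step z y : f z = M -> 0 < K z y -> f y = M.
    move=> fz Kzy.
    have S : \sum_x K z x * (M - f x) = 0.
      rewrite (eq_bigr (fun x => M * K z x - K z x * f x)); last by move=> x _; ring.
      by rewrite sumrB -mulr_sumr K1 harm fz mulr1 subrr.
    have H : K z y * (M - f y) = 0.
      by apply: (psumr_eq0P _ S) => // x _; rewrite mulr_ge0 // subr_ge0.
    apply/eqP; rewrite eq_le Hmax /=.
    move: H.
    move/eqP; rewrite mulf_eq0 gt_eqF //= subr_eq0 => /eqP ->; exact: lexx.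
  have allM y : f y = M.
    have [n Hn] := Kirr x0 y.
    elim: n y Hn => [|n IH] y /=.
      by case: eqP => [<- //|_]; rewrite ltxx.
    move=> Hs.
    have [z _ Hz] : exists2 z, true & 0 < kpow K n x0 z * K z y.
      apply/exists_inP; apply: contraLR Hs; rewrite negb_exists_in => /forall_inP Hz.
      rewrite -leNgt; apply: sumr_le0 => z _; rewrite leNgt; exact: Hz.
    have kp : 0 <= kpow K n x0 z.
      elim: n {IH Hs Hz} z => [|n IH'] z' /=; first by case: eqP.
      by apply: sumr_ge0 => u _; rewrite mulr_ge0.
    have [Hk HK] : kpow K n x0 z != 0 /\ K z y != 0.
      by move: Hz; rewrite lt0r mulf_eq0 negb_or => /andP[/andP[a b] _]; split.
    apply: (step z); first by apply: IH; rewrite lt_def Hk kp.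
    by rewrite lt_def HK K0.
  exists M; last by move=> x; rewrite pf allM mulrC.
  have : 0 < \sum_x w x by rewrite (bigD1 i0) //= ltr_wpDr // sumr_ge0 // => x _; rewrite ltW.
  have E : \sum_x p x = M * \sum_x w x by rewrite mulr_sumr; apply: eq_bigr => x _; rewrite pf allM.
  move=> ws; move: p1; rewrite E => HM.
  have M0 : 0 <= M by rewrite -(allM i0) /f divr_ge0 // ltW.
  have Mn0 : M != 0.
    by apply/eqP => E0; move: HM; rewrite E0 mul0r => /esym/eqP; rewrite oner_eq0.
  by rewrite lt_def M0 Mn0.
have stc : forall c, stationary K (fun x => c * w x).
  move=> c y /=; rewrite (eq_bigr (fun x => c * w y * K y x)) => [|x _]; last by rewrite -mulrA db mulrA.
  by rewrite -mulr_sumr K1 mulr1.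
split.
  move=> p; split.
    by move=> [D st]; split => //; apply: key.
  move=> [D [c c0 pc]]; split => // y.
  have -> : p = (fun x => c * w x) by apply: funext.
  exact: stc.
move=> p D st x y; have [c _ pc] := key p D st.
by rewrite !pc -!mulrA db.
Qed.


Theorem lemma1 (R : realType) (T : finType) (pi : T -> R) (N : T -> {set T})
  (hpi_pos : forall x, 0 < pi x)
  (hpi_sum : \sum_(x : T) pi x = 1)
  (hN_irr : forall x, x \notin N x)
  (hN_sym : forall x y, (y \in N x) = (x \in N y))
  (hN_ne : forall x, N x != finset.set0)
  (hN_irred : forall K : T -> T -> R, stochastic K ->
      (forall x y, 0 < K x y <-> y \in N x) -> irreducible K)
  (h : R -> R) (hh_pos : forall u, 0 < u -> 0 < h u) :
  (forall a : R, 0 <= a -> (forall u, 0 < u -> h u = u `^ a) ->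
     stationary_prop_and_reversible (Kh pi N h)
       (fun x => pi x `^ (2 * a) * Zh pi N h x))
  /\
  (balancing h ->
     stationary_prop_and_reversible (Kh pi N h) (fun x => pi x * Zh pi N h x)).
Proof.
have Zpos x : 0 < Zh pi N h x.
  have [y Hy] := set0Pn _ (hN_ne x).
  rewrite /Zh (bigD1 y) //= ltr_pwDl // ?hh_pos ?divr_gt0 //.
  by apply: sumr_ge0 => z _; rewrite ltW // hh_pos // divr_gt0.
have Kst : stochastic (Kh pi N h).
  split.
    move=> x y; rewrite /Kh; case: ifP => _; rewrite ?mul0r ?mul1r //.
    by rewrite divr_ge0 // ltW // ?hh_pos ?divr_gt0.
  move=> x; rewrite /Kh -mulr_suml.
  rewrite (eq_bigr (fun y => if y \in N x then h (pi y / pi x) else 0)) => [|y _]; last by case: ifP; rewrite ?mul1r ?mul0r.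
  rewrite -big_mkcond /=.
  by rewrite -/(Zh pi N h x) divff // gt_eqF.
have Kirr : irreducible (Kh pi N h).
  apply: hN_irred => // x y; rewrite /Kh; case: ifP => Hy; split => //.
    by move=> _; rewrite mul1r divr_gt0 // hh_pos // divr_gt0.
  by rewrite !mul0r ltxx.
have db_gen : forall (w v : T -> R), (forall x, w x = v x * Zh pi N h x) ->
    (forall x y, y \in N x -> v x * h (pi y / pi x) = v y * h (pi x / pi y)) ->
    forall x y, w x * Kh pi N h x y = w y * Kh pi N h y x.
  move=> w v Hw Hv x y; rewrite /Kh -hN_sym; case: ifP => Hy; last by rewrite !mul0r !mulr0.
  rewrite !mul1r !Hw !mulrA [v x * _ * _]mulrAC [v y * _ * _]mulrAC !mulfK ?gt_eqF //.
  by apply: Hv; rewrite hN_sym.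
have Zw : forall vv : T -> R, (forall x, 0 < vv x) -> forall x, 0 < vv x * Zh pi N h x.
  by move=> vv Hv x; rewrite mulr_gt0.
split.
  move=> a a0 ha; apply: abs_main => //.
    by apply: Zw => x; rewrite powR_gt0.
  apply: (db_gen _ (fun x => pi x `^ (2 * a))) => // x y _.
  rewrite !ha ?divr_gt0 // mulr_natl mulr2n.
  rewrite !powRD ?(gt_eqF (hpi_pos _)) ?implybT //.
  rewrite -!mulrA -!powRM ?ltW ?divr_gt0 // ![pi _ * (_ / _)]mulrC !divfK ?gt_eqF //.
  by rewrite mulrC.
move=> hb; apply: abs_main => //.
  exact: Zw.
apply: (db_gen _ pi) => // x y _.
rewrite hb ?divr_gt0 // invf_div mulrA [pi x * _]mulrC divfK ?gt_eqF //.
Qed.
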